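(* Let $\psi$ be a DoR fairness property, let $l,u$ be welfare bounds with $u-l\le\kappa$, and let $\pi$ be a Static-BW shield (with period $T$ and welfare bounds $l,u$). Let $\tau=\tau_1\cdots\tau_m\in\mathtt{FT}^{mT}_{\theta,\pi}$ with $|\tau_i|=T$ for each $i\le m$. If every $\tau_i$ is $N$-balanced w.r.t. $\mathtt{den}^a$ and $\mathtt{den}^b$ for $N=\lceil 1/(u-l)\rceil$, then $\psi(\tau)\le\kappa$.
   Context: Input space $\mathcal{X}=\{a,b\}\times\{0,1\}\times\mathbb{C}$ ($\mathbb{C}\subset\mathbb{R}_{\ge0}$ finite; $x=(g,r,c)$ = group, recommendation, cost), output space $\mathcal{Y}=\{0,1\}$, input distribution $\theta$, threshold $\kappa$. Shields $\pi:(\mathcal{X}\times\mathcal{Y})^*\times\mathcal{X}\to\mathcal{Y}$, set $\Pi$. $\mathtt{FT}^t_{\theta,\pi}$: traces of length $t$ with $\theta(x_i)>0$ and $y_i=\pi(\text{prefix},x_i)$. $\mathit{cost}(\tau)=\sum c_i\mathbb{1}[r_i\neq y_i]$; $\mathbb{E}[\mathit{cost};\theta,\pi,T]=\sum_{\tau\in(\mathcal{X}\times\mathcal{Y})^T}\mathit{cost}(\tau)\prod\theta(x_i)\mathbb{1}[\tau\in\mathtt{FT}^T_{\theta,\pi}]$. DoR: $\mathtt{WF}^g=\mathtt{num}^g/\mathtt{den}^g$ with $\mathtt{num}^g,\mathtt{den}^g$ additive single-counter statistics (traces $\to\mathbb{N}$, $\mu(\tau\tau')=\mu(\tau)+\mu(\tau')$),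 $\psi=|\mathtt{WF}^a-\mathtt{WF}^b|$. A length-$T$ trace is $N$-balanced w.r.t. $\mathtt{den}^a,\mathtt{den}^b$ if both are $\ge N$; $\mathtt{BT}^T_N$ is the set of such traces. $\Pi_{\mathtt{BW}}^{\theta,T,N}=\{\pi\in\Pi:\forall\tau\in\mathtt{FT}^T_{\theta,\pi}\cap\mathtt{BT}^T_N,\ \forall g,\ l\le\mathtt{WF}^g(\tau)\le u\}$. A Static-BW shield is the concatenation of infinitely many copies of $\pi^*\in\arg\min_{\pi\in\Pi_{\mathtt{BW}}^{\theta,T,N}}\mathbb{E}[\mathit{cost};\theta,\pi,T]$ with $N=\lceil 1/(u-l)\rceil$, where the concatenation of $\pi_1,\pi_2,\dots$ is the shield $\pi$ with $\pi(\tau\tau',x)=\pi_{j+1}(\tau',x)$ whenever $|\tau|=jT$, $|\tau'|<T$. *)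

(* Defs.v *)
From HB Require Import structures.
From mathcomp Require Import all_boot all_order all_algebra.
From mathcomp Require Import finmap.
From mathcomp Require Import reals.
Set Implicit Arguments. Unset Strict Implicit. Unset Printing Implicit Defensive.
Import Order.TTheory GRing.Theory Num.Theory.
Local Open Scope ring_scope.

Section Defs.
Variable R : realType.
Variable C : {fset R}.

Definition grp := bool.
Definition ga : grp := true.
Definition gb : grp := false.

Definition X : finType := (grp * bool * C)%type.
Definition Y := bool.
Definition trace := seq (X * Y).
Definition shield := trace -> X -> Y.

Definition xgroup (x : X) : grp := x.1.1.
Definition xrec (x : X) : bool := x.1.2.
Definition xcost (x : X) : R := val x.2.

Fixpoint feasible_from (theta : X -> R) (pi : shield) (pre tau : trace) : bool :=
  match tau with
  | [::] => true
  | e :: t => [&& 0 < theta e.1, e.2 == pi pre e.1 & feasible_from theta pi (rcons pre e) t]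
  end.

Definition FT (t : nat) (theta : X -> R) (pi : shield) (tau : trace) : bool :=
  (size tau == t) && feasible_from theta pi [::] tau.

Definition cost (tau : trace) : R :=
  \sum_(e <- tau) xcost e.1 * (xrec e.1 != e.2)%:R.

Definition expected_cost (theta : X -> R) (pi : shield) (T : nat) : R :=
  \sum_(tau : T.-tuple (X * Y))
     cost tau * (\prod_(e <- tau) theta e.1) * (FT T theta pi tau)%:R.

Definition additive_stat (mu : trace -> nat) : Prop :=
  forall t t' : trace, mu (t ++ t') = (mu t + mu t')%N.

Definition WF (num den : grp -> trace -> nat) (g : grp) (tau : trace) : R :=
  (num g tau)%:R / (den g tau)%:R.

Definition psi (num den : grp -> trace -> nat) (tau : trace) : R :=
  `|WF num den ga tau - WF num den gb tau|.

Definition balanced (den : grp -> trace -> nat) (N : int) (tau : trace) : bool :=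
  (N <= (den ga tau)%:Z) && (N <= (den gb tau)%:Z).

Definition in_Pi_BW (theta : X -> R) (T : nat) (N : int)
    (num den : grp -> trace -> nat) (l u : R) (pi : shield) : Prop :=
  forall tau : trace, FT T theta pi tau -> balanced den N tau ->
    forall g : grp, l <= WF num den g tau <= u.

Definition N_of (l u : R) : int := Num.ceil (1 / (u - l)).

(* concatenation of infinitely many copies of pistar with period T *)
Definition concat_shield (pistar : shield) (T : nat) : shield :=
  fun h x => pistar (drop (T * (size h %/ T)) h) x.

Definition static_BW (theta : X -> R) (T : nat) (num den : grp -> trace -> nat)
    (l u : R) (pi : shield) : Prop :=
  exists pistar : shield,
    [/\ in_Pi_BW theta T (N_of l u) num den l u pistar,
        (forall pi' : shield, in_Pi_BW theta T (N_of l u) num den l u pi' ->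
           expected_cost theta pistar T <= expected_cost theta pi' T)
      & (forall h x, pi h x = concat_shield pistar T h x)].

End Defs.

(* Main.v *)
Require Import Defs.
From HB Require Import structures.
From mathcomp Require Import all_boot all_order all_algebra.
From mathcomp Require Import finmap.
From mathcomp Require Import reals.
From mathcomp Require Import lra.
Import Order.TTheory GRing.Theory Num.Theory.
Local Open Scope ring_scope.

Lemma feasible_cat (R : realType) (C : {fset R}) (th : X C -> R) (p : shield C)
  (s t pre : trace C) :
  feasible_from th p pre (s ++ t) =
  feasible_from th p pre s && feasible_from th p (pre ++ s) t.
Proof.
elim: s pre => [|e s IH] pre /=; first by rewrite cats0.
by rewrite IH -cat_rcons !andbA.
Qed.

Lemma feasible_shift (R : realType) (C : {fset R}) (th : X C -> R) (p ps : shield C)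
  (T : nat) (Hp : forall h x, p h x = concat_shield ps T h x) (pre : trace C)
  (Hpre : (T %| size pre)%N) (t s : trace C) :
  (size s + size t <= T)%N ->
  feasible_from th p (pre ++ s) t = feasible_from th ps s t.
Proof.
elim: t s => [|e t IH] s //= Hst.
have HsT : (size s < T)%N by rewrite addnS in Hst; apply: leq_ltn_trans Hst; apply: leq_addr.
rewrite Hp /concat_shield size_cat divnDl // (divn_small HsT) addn0 mulnC divnK //.
rewrite drop_size_cat // rcons_cat IH //.
by rewrite size_rcons addSn -addnS.
Qed.

Lemma feasible_segs (R : realType) (C : {fset R}) (th : X C -> R) (p ps : shield C)
  (T : nat) (Hp : forall h x, p h x = concat_shield ps T h x) (taus : seq (trace C)) :
  (forall t, t \in taus -> size t = T) ->
  forall pre : trace C, (T %| size pre)%N -> feasible_from th p pre (flatten taus) ->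
  forall t, t \in taus -> feasible_from th ps [::] t.
Proof.
elim: taus => [|t0 ts IH] Hs pre Hpre //=.
rewrite feasible_cat => /andP[H0 H1] t; rewrite inE => /orP[/eqP->|Ht].
  rewrite -(@feasible_shift _ _ th p ps T Hp pre Hpre t0 [::]) ?cats0 //.
  by rewrite add0n Hs ?mem_head.
apply: (IH _ (pre ++ t0)) => //.
  by move=> t' Ht'; apply: Hs; rewrite inE Ht' orbT.
rewrite size_cat (Hs t0 (mem_head _ _)); apply: dvdn_add => //; exact: dvdnn.
Qed.

Lemma stat_nil (T : Type) (mu : seq T -> nat) :
  (forall t t', mu (t ++ t') = (mu t + mu t')%N) -> mu [::] = 0%N.
Proof. by move=> H; have := H [::] [::]; rewrite cats0 => /eqP; rewrite -{1}[mu _]addn0 eqn_add2l => /eqP. Qed.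

Arguments stat_nil {T mu}.

Lemma stat_flatten (T : Type) (mu : seq T -> nat) :
  (forall t t', mu (t ++ t') = (mu t + mu t')%N) ->
  forall s, mu (flatten s) = (\sum_(t <- s) mu t)%N.
Proof.
move=> H; elim=> [|t s IH] /=; first by rewrite big_nil (stat_nil H).
by rewrite H IH big_cons.
Qed.

Arguments stat_flatten {T mu}.

Theorem theorem6p3 (R : realType) (C : {fset R})
  (hC : forall c : R, c \in C -> 0 <= c)
  (theta : X C -> R)
  (theta_ge0 : forall x, 0 <= theta x)
  (theta_sum1 : \sum_(x : X C) theta x = 1)
  (kappa : R)
  (num den : grp -> trace C -> nat)
  (num_add : forall g, additive_stat (num g))
  (den_add : forall g, additive_stat (den g))
  (l u : R) (hlu : l < u) (hkappa : u - l <= kappa)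
  (T : nat) (pi : shield C)
  (hpi : static_BW theta T num den l u pi)
  (m : nat) (taus : seq (trace C))
  (hm : size taus = m)
  (hsize : forall t, t \in taus -> size t = T)
  (hFT : FT (m * T) theta pi (flatten taus))
  (hbal : forall t, t \in taus -> balanced den (N_of l u) t) :
  psi num den (flatten taus) <= kappa.
Proof.
case: hpi => ps [HBW _ Hp].
move: hFT => /andP[_ Hfeas].
have Hseg := @feasible_segs _ _ theta pi ps T Hp taus hsize [::] (dvdn0 T) Hfeas.
have HN : 0 < N_of l u by rewrite /N_of ceil_gt0 divr_gt0 // subr_gt0.
have Hden : forall g t, t \in taus -> (0 < den g t)%N.
  move=> g t Ht; have /andP[Ha Hb] := hbal t Ht.
  have : 0 < (den g t)%:Z by case: g; [apply: lt_le_trans Ha | apply: lt_le_trans Hb].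
  by rewrite ltz_nat.
have Hw : forall g t, t \in taus -> l * (den g t)%:R <= (num g t)%:R <= u * (den g t)%:R.
  move=> g t Ht.
  have Hft : FT T theta ps t by rewrite /FT hsize // eqxx Hseg.
  have /andP[H1 H2] := HBW t Hft (hbal t Ht) g.
  have Hd : 0 < (den g t)%:R :> R by rewrite ltr0n Hden.
  move: H1 H2; rewrite /WF ler_pdivlMr // ler_pdivrMr // => H1 H2.
  by rewrite H1 H2.
case: taus hm hsize Hfeas hbal Hseg Hden Hw => [|t0 ts] hm hsize Hfeas hbal Hseg Hden Hw.
  rewrite /psi /WF /= !(stat_nil (num_add _)) !(stat_nil (den_add _)).
  by rewrite !mul0r subrr normr0; apply: le_trans hkappa; rewrite subr_ge0 ltW.
have HWF : forall g, l <= WF num den g (flatten (t0 :: ts)) <= u.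
  move=> g; rewrite /WF (stat_flatten (num_add g)) (stat_flatten (den_add g)).
  have HD : 0 < (\sum_(t <- t0 :: ts) den g t)%:R :> R.
    rewrite ltr0n big_cons; apply: (leq_trans (Hden g t0 (mem_head _ _))); apply: leq_addr.
  rewrite ler_pdivlMr // ler_pdivrMr // !natr_sum !mulr_sumr.
  rewrite !(@big_seq _ _ _ _ (t0 :: ts)).
  apply/andP; split; apply: ler_sum => t Ht; by case/andP: (Hw g t Ht).
rewrite /psi; apply: le_trans hkappa.
have /andP[Ha1 Ha2] := HWF ga; have /andP[Hb1 Hb2] := HWF gb.
rewrite ler_norml; apply/andP; split; lra.
Qed.
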